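(* There is an absolute constant $C>0$ such that the following holds. Let $\epsilon\in(0,1)$, let $u\in\mathbb{R}^d$, and let $S\subseteq\mathbb{R}^d$ be a finite set of vectors of Euclidean norm at most $1$ with pairwise distinct values $u^Tx$, of intrinsic dimension $d'$. Let $t=\lceil C d'\log(d'/\epsilon)\rceil$ and suppose $|S|\ge 4t$. Then $$|\{x\in S:\ S\setminus\{x\}\vdash x\}|\ge \tfrac34|S|.$$
   Context: For a finite set $T=\{x_1,\dots,x_s\}$ sorted so that $u^Tx_1>\dots>u^Tx_s$, write $T\vdash x$ if $\min_{\alpha_1,\dots,\alpha_{s-1}\ge 0}\big\|x-x_1-\sum_{j=1}^{s-1}\alpha_j(x_{j+1}-x_j)\big\|_2\le\epsilon$. The intrinsic dimension of a set is the smallest number of orthonormal vectors whose span contains the set. *)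

(* Defs.v *)
From HB Require Import structures.
From mathcomp Require Import all_boot all_order all_algebra.
From mathcomp Require Import boolp reals exp.
Set Implicit Arguments. Unset Strict Implicit. Unset Printing Implicit Defensive.
Import Order.TTheory GRing.Theory Num.Theory.
Local Open Scope ring_scope.

Definition dotv (R : ringType) (d : nat) (u x : 'rV[R]_d) : R :=
  \sum_(i < d) u 0 i * x 0 i.

Definition norm2 (R : rcfType) (d : nat) (x : 'rV[R]_d) : R :=
  Num.sqrt (\sum_(i < d) x 0 i ^+ 2).

Definition sort_by_u (R : realFieldType) (d : nat) (u : 'rV[R]_d)
  (T : seq 'rV[R]_d) : seq 'rV[R]_d :=
  sort (fun x y => dotv u y <= dotv u x) T.

(* T |- x : min_{alpha >= 0} || x - x_1 - sum_j alpha_j (x_{j+1} - x_j) || <= eps.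
   The minimum over the closed cone is attained, so this is written as the
   existence of nonnegative alpha achieving distance <= eps.
   For empty T (no x_1) the relation is false. *)
Definition derives (R : rcfType) (d : nat) (eps : R) (u : 'rV[R]_d)
  (T : seq 'rV[R]_d) (x : 'rV[R]_d) : Prop :=
  let xs := sort_by_u u T in
  match xs with
  | [::] => False
  | x1 :: _ =>
      exists alpha : nat -> R, (forall j, 0 <= alpha j) /\
        norm2 (x - x1 - \sum_(j < (size xs).-1)
                          alpha j *: (xs`_j.+1 - xs`_j)) <= eps
  end.

Definition orth_span_dim (R : rcfType) (d : nat) (S : seq 'rV[R]_d) (k : nat) : Prop :=
  exists V : 'M[R]_(k, d), V *m V^T = 1%:M /\ forall x, x \in S -> (x <= V)%MS.

Definition intrinsic_dim (R : rcfType) (d : nat) (S : seq 'rV[R]_d) (k : nat) : Prop :=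
  orth_span_dim S k /\ forall k', orth_span_dim S k' -> (k <= k')%N.

(* Main.v *)
Require Import Defs.
From HB Require Import structures.
From mathcomp Require Import all_boot all_order all_algebra.
From mathcomp Require Import perm.
From mathcomp Require Import boolp classical_sets reals exp.
From mathcomp Require Import ring lra zify.
Import Order.TTheory GRing.Theory Num.Theory.
Local Open Scope ring_scope.

Set Implicit Arguments. Unset Strict Implicit. Unset Printing Implicit Defensive.

Section Dot.
Variable R : realFieldType.

Definition dotp n (x y : 'rV[R]_n) : R := (x *m y^T) 0 0.
Definition bf n (W : 'M[R]_n) (x y : 'rV[R]_n) : R := (x *m W *m y^T) 0 0.

Lemma dotpE n (x y : 'rV[R]_n) : dotp x y = \sum_i x 0 i * y 0 i.
Proof. by rewrite /dotp mxE; apply: eq_bigr => i _; rewrite mxE. Qed.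

Lemma dotpC n (x y : 'rV[R]_n) : dotp x y = dotp y x.
Proof. by rewrite !dotpE; apply: eq_bigr => i _; rewrite mulrC. Qed.

Lemma dotpDl n (x y z : 'rV[R]_n) : dotp (x + y) z = dotp x z + dotp y z.
Proof. by rewrite /dotp mulmxDl mxE. Qed.

Lemma dotpZl n a (x z : 'rV[R]_n) : dotp (a *: x) z = a * dotp x z.
Proof. by rewrite /dotp -scalemxAl mxE. Qed.

Lemma dotpNl n (x z : 'rV[R]_n) : dotp (- x) z = - dotp x z.
Proof. by rewrite -scaleN1r dotpZl mulN1r. Qed.

Lemma dotpBl n (x y z : 'rV[R]_n) : dotp (x - y) z = dotp x z - dotp y z.
Proof. by rewrite dotpDl dotpNl. Qed.

Lemma dotpDr n (x y z : 'rV[R]_n) : dotp z (x + y) = dotp z x + dotp z y.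
Proof. by rewrite dotpC dotpDl !(dotpC z). Qed.

Lemma dotpZr n a (x z : 'rV[R]_n) : dotp z (a *: x) = a * dotp z x.
Proof. by rewrite dotpC dotpZl dotpC. Qed.

Lemma dotpBr n (x y z : 'rV[R]_n) : dotp z (x - y) = dotp z x - dotp z y.
Proof. by rewrite dotpC dotpBl !(dotpC z). Qed.

Lemma dotp0r n (z : 'rV[R]_n) : dotp z 0 = 0.
Proof. by rewrite dotpE big1 // => i _; rewrite mxE mulr0. Qed.

Lemma dotp_ge0 n (x : 'rV[R]_n) : 0 <= dotp x x.
Proof. by rewrite dotpE sumr_ge0 // => i _; rewrite -expr2 sqr_ge0. Qed.

Lemma dotp_eq0 n (x : 'rV[R]_n) : dotp x x = 0 -> x = 0.
Proof.
rewrite dotpE => /eqP; rewrite psumr_eq0 => [/allP H|i _]; last first.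
  by rewrite -expr2 sqr_ge0.
apply/rowP => i; rewrite mxE.
by have := H i (mem_index_enum i); rewrite implyTb mulf_eq0 orbb => /eqP.
Qed.

Lemma coord_sq_le n (x : 'rV[R]_n) i : x 0 i ^+ 2 <= dotp x x.
Proof.
rewrite dotpE (bigD1 i) //= expr2 lerDl sumr_ge0 // => j _.
by rewrite -expr2 sqr_ge0.
Qed.

Lemma coord_prod_le n (x : 'rV[R]_n) i j : `|x 0 i * x 0 j| <= dotp x x.
Proof.
have hi := coord_sq_le x i; have hj := coord_sq_le x j.
rewrite normrM.
have ei : `|x 0 i| ^+ 2 = x 0 i ^+ 2 by rewrite real_normK ?num_real.
have ej : `|x 0 j| ^+ 2 = x 0 j ^+ 2 by rewrite real_normK ?num_real.
have := sqr_ge0 (`|x 0 i| - `|x 0 j|).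
rewrite -ei in hi; rewrite -ej in hj.
move: hi hj; set a := `|x 0 i|; set b := `|x 0 j|; set D := dotp x x.
move=> ha hb h. nra.
Qed.

Lemma bfDl n (W : 'M[R]_n) x1 x2 y : bf W (x1 + x2) y = bf W x1 y + bf W x2 y.
Proof. by rewrite /bf !mulmxDl mxE. Qed.
Lemma bfZl n (W : 'M[R]_n) a x y : bf W (a *: x) y = a * bf W x y.
Proof. by rewrite /bf -!scalemxAl mxE. Qed.
Lemma bf_sym n (W : 'M[R]_n) x y : W^T = W -> bf W x y = bf W y x.
Proof.
move=> hW; rewrite /bf.
rewrite -[in LHS](trmxK (x *m W *m y^T)) [in LHS]mxE.
by rewrite !trmx_mul trmxK hW mulmxA.
Qed.

Lemma bf_quad n (W : 'M[R]_n) a b x y : W^T = W ->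
  bf W (a *: x + b *: y) (a *: x + b *: y) =
  a ^+ 2 * bf W x x + 2 * a * b * bf W x y + b ^+ 2 * bf W y y.
Proof.
move=> hW.
have bfDr : forall u v w, bf W w (u + v) = bf W w u + bf W w v.
  by move=> u v w; rewrite (bf_sym _ _ hW) bfDl !(bf_sym u) // (bf_sym v).
have bfZr : forall c u w, bf W w (c *: u) = c * bf W w u.
  by move=> c u w; rewrite (bf_sym _ _ hW) bfZl (bf_sym u).
rewrite bfDl !bfZl !bfDr !bfZr (bf_sym y x hW). ring.
Qed.

Lemma bf_CS n (W : 'M[R]_n) h y : W^T = W -> (forall x, 0 <= bf W x x) ->
  0 < bf W h h -> bf W h y ^+ 2 <= bf W h h * bf W y y.
Proof.
move=> hW hpos hh.
have := hpos (bf W h y *: h + (- bf W h h) *: y).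
rewrite bf_quad //.
set a := bf W h y; set b := bf W h h; set c := bf W y y.
move=> H.
have : 0 <= b * (b * c - a ^+ 2) by move: H; congr (_ <= _); ring.
rewrite pmulr_rge0 // subr_ge0 => H2. lra.
Qed.

End Dot.


Lemma det1Dmul (R : comPzRingType) n (a : 'cV[R]_n) (b : 'rV[R]_n) :
  \det (1%:M + a *m b) = 1 + (b *m a) 0 0.
Proof.
pose M := block_mx (1%:M : 'M[R]_1) b (- a) 1%:M.
have e1 : M = block_mx (1%:M : 'M[R]_1) 0 (- a) 1%:M *m block_mx 1%:M b 0 (1%:M + a *m b).
  rewrite /M mulmx_block; congr block_mx;
  rewrite ?mul1mx ?mulmx1 ?mul0mx ?mulmx0 ?addr0 ?add0r ?mulNmx ?mulmxN //.
  by rewrite addrC addrK.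
have e2 : M = block_mx (1%:M + b *m a : 'M[R]_1) b 0 1%:M *m block_mx 1%:M 0 (- a) 1%:M.
  rewrite /M mulmx_block; congr block_mx;
  rewrite ?mul1mx ?mulmx1 ?mul0mx ?mulmx0 ?addr0 ?add0r ?mulNmx ?mulmxN //.
  by rewrite addrK.
have := congr1 determinant e1; rewrite e2 !det_mulmx.
rewrite (det_lblock (1%:M : 'M[R]_1) (- a) 1%:M).
rewrite (det_ublock (1%:M + b *m a : 'M[R]_1) b 1%:M).
rewrite (det_ublock (1%:M : 'M[R]_1) b (1%:M + a *m b)).
rewrite !det1 !mul1r !mulr1 det_mx11 => <-.
rewrite [LHS]mxE; congr (_ + _); rewrite mxE.
by rewrite eqxx.
Qed.

Section Pot.
Variable R : realFieldType.

Lemma detD_rank1 n (W : 'M[R]_n) (z : 'rV[R]_n) : W \in unitmx ->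
  \det (W + z^T *m z) = \det W * (1 + bf (invmx W) z z).
Proof.
move=> hW.
have -> : W + z^T *m z = W *m (1%:M + (invmx W *m z^T) *m z).
  by rewrite mulmxDr mulmx1 !mulmxA mulmxV // mul1mx.
by rewrite det_mulmx det1Dmul /bf mulmxA.
Qed.

Variables (n : nat) (e : R) (P : pred nat) (z : nat -> 'rV[R]_n.+1).

Definition Wk k : 'M[R]_n.+1 := (e ^+ 2)%:M + \sum_(a < k | P a) (z a)^T *m z a.
Definition cnt k : nat := (\sum_(a < k | P a) 1)%N.

Lemma bf_rank1 (x y : 'rV[R]_n.+1) : bf (y^T *m y) x x = dotp x y ^+ 2.
Proof.
rewrite /bf.
have -> : x *m (y^T *m y) *m x^T = (x *m y^T) *m (y *m x^T) by rewrite !mulmxA.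
rewrite mxE big_ord1 -/(dotp x y) -/(dotp y x) dotpC expr2 //.
Qed.

Lemma bf_Wk k x : bf (Wk k) x x = e ^+ 2 * dotp x x + \sum_(a < k | P a) dotp x (z a) ^+ 2.
Proof.
rewrite /bf /Wk mulmxDr mulmxDl mxE mul_mx_scalar -scalemxAl mxE; congr (_ + _).
rewrite mulmx_sumr mulmx_suml summxE; apply: eq_bigr => a _.
by rewrite -bf_rank1.
Qed.

Lemma Wk_sym k : (Wk k)^T = Wk k.
Proof.
rewrite /Wk linearD /= tr_scalar_mx linear_sum /=; congr (_ + _).
by apply: eq_bigr => a _; rewrite trmx_mul trmxK.
Qed.

Lemma Wk_pos k x : 0 <= bf (Wk k) x x.
Proof.
rewrite bf_Wk; apply: addr_ge0; first by rewrite mulr_ge0 ?sqr_ge0 ?dotp_ge0.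
by rewrite sumr_ge0 // => a _; rewrite sqr_ge0.
Qed.

Lemma Wk_S k : Wk k.+1 = Wk k + (if P k then (z k)^T *m z k else 0).
Proof.
rewrite /Wk -addrA; congr (_ + _).
rewrite big_mkcond big_ord_recr /= -big_mkcond //.
Qed.

Lemma cnt_S k : cnt k.+1 = (cnt k + P k)%N.
Proof.
rewrite /cnt big_mkcond big_ord_recr /= -big_mkcond /=.
by case: (P k).
Qed.

Lemma inv_sym (W : 'M[R]_n.+1) : W^T = W -> (invmx W)^T = invmx W.
Proof. by move=> h; rewrite trmx_inv h. Qed.

Lemma pot_step k : 0 < \det (Wk k) ->
  (P k -> exists h, 0 < dotp h h /\
      e ^+ 2 * dotp h h + \sum_(a < k | P a) dotp h (z a) ^+ 2 <= dotp h (z k) ^+ 2) ->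
  0 < e ->
  \det (Wk k) * 2 ^+ P k <= \det (Wk k.+1).
Proof.
move=> hdet hyp he; rewrite Wk_S.
case hP: (P k); last by rewrite addr0 expr0 mulr1.
have [h [hh hineq]] := hyp hP.
have hU : Wk k \in unitmx by rewrite unitmxE unitfE gt_eqF.
rewrite detD_rank1 // expr1 ler_pM2l //.
set W := Wk k.
set y := z k *m invmx W.
have e1 : bf (invmx W) (z k) (z k) = bf W y y.
  by rewrite /bf /y (mulmxKV hU) trmx_mul inv_sym ?Wk_sym // mulmxA.
have e2 : bf W h y = dotp h (z k).
  by rewrite /bf /y trmx_mul inv_sym ?Wk_sym // mulmxA (mulmxK hU).
have hpos : 0 < bf W h h.
  rewrite bf_Wk; apply: (@lt_le_trans _ _ (e ^+ 2 * dotp h h)).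
    by rewrite mulr_gt0 // exprn_gt0.
  by rewrite lerDl sumr_ge0 // => a _; rewrite sqr_ge0.
have hCS := bf_CS y (Wk_sym k) (@Wk_pos k) hpos.
have hWh : bf W h h <= dotp h (z k) ^+ 2 by rewrite bf_Wk.
rewrite e1.
rewrite e2 in hCS.
suff : 1 <= bf W y y by lra.
have : bf W h h * 1 <= bf W h h * bf W y y by rewrite mulr1; apply: le_trans hCS.
by rewrite ler_pM2l.
Qed.

Lemma pot_lower N : 0 < e ->
  (forall b, (b < N)%N -> P b -> exists h, 0 < dotp h h /\
      e ^+ 2 * dotp h h + \sum_(a < b | P a) dotp h (z a) ^+ 2 <= dotp h (z b) ^+ 2) ->
  0 < \det (Wk N) /\ 2 ^+ cnt N * e ^+ (2 * n.+1) <= \det (Wk N).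
Proof.
move=> he hyp; elim: N hyp => [|k IH] hyp.
  rewrite /Wk /cnt !big_ord0 addr0 det_scalar expr0 mul1r -exprM.
  by split=> //; rewrite exprn_gt0 // exprn_gt0.
have [h1 h2] : 0 < \det (Wk k) /\ 2 ^+ cnt k * e ^+ (2 * n.+1) <= \det (Wk k).
  by apply: IH => b hb; apply: hyp; apply: ltn_trans hb _.
have hs := pot_step h1 (hyp k (ltnSn k)) he.
have h2P : 0 < 2 ^+ P k :> R by rewrite exprn_gt0.
split.
  by apply: lt_le_trans hs; rewrite mulr_gt0.
apply: le_trans hs; rewrite cnt_S exprD mulrAC ler_pM2r //.
Qed.

Lemma det_bound m (A : 'M[R]_m) M : (forall i j, `|A i j| <= M) ->
  \det A <= (m`!)%:R * M ^+ m.
Proof.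
case: m A => [|m] A hA; first by rewrite det_mx00 expr0 mulr1.
have M0 : 0 <= M by apply: le_trans (hA 0 0); rewrite normr_ge0.
apply: le_trans (ler_norm _) _.
rewrite /determinant; apply: le_trans (ler_norm_sum _ _ _) _.
have -> : (m.+1`!)%:R * M ^+ m.+1 = \sum_(s : 'S_m.+1) M ^+ m.+1.
  by rewrite sumr_const perm.card_Sn mulr_natl.
apply: ler_sum => s _; rewrite normrMsign normr_prod.
rewrite -[in X in _ <= X](card_ord m.+1) -prodr_const; apply: ler_prod => i _.
by rewrite normr_ge0 hA.
Qed.

Lemma Wk_entry N i j : (forall a, (a < N)%N -> P a -> dotp (z a) (z a) <= 4) ->
  `|Wk N i j| <= e ^+ 2 + 4 * (cnt N)%:R.
Proof.
move=> hz; rewrite /Wk mxE summxE.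
apply: le_trans (ler_normD _ _) _; apply: lerD.
  rewrite mxE; case: (i == j) => /=.
    by rewrite mulr1n ger0_norm ?sqr_ge0.
  by rewrite mulr0n normr0 sqr_ge0.
apply: le_trans (ler_norm_sum _ _ _) _.
rewrite /cnt natr_sum mulr_sumr.
apply: ler_sum => a Pa; rewrite mulr1.
rewrite mxE big_ord1 !mxE.
by apply: le_trans (coord_prod_le _ _ _) (hz a (ltn_ord a) Pa).
Qed.

Theorem potential N : 0 < e ->
  (forall a, (a < N)%N -> P a -> dotp (z a) (z a) <= 4) ->
  (forall b, (b < N)%N -> P b -> exists h, 0 < dotp h h /\
      e ^+ 2 * dotp h h + \sum_(a < b | P a) dotp h (z a) ^+ 2 <= dotp h (z b) ^+ 2) ->
  2 ^+ cnt N * e ^+ (2 * n.+1) <= (n.+1`!)%:R * (e ^+ 2 + 4 * (cnt N)%:R) ^+ n.+1.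
Proof.
move=> he hz hyp.
have [_ h2] := pot_lower he hyp.
apply: le_trans h2 _; apply: det_bound => i j; exact: Wk_entry.
Qed.

End Pot.


Section Sep.
Variable R : realType.
Local Open Scope classical_set_scope.

Lemma dotp_expand k (h g : 'rV[R]_k) c :
  dotp (h + c *: g) (h + c *: g) = dotp h h + 2 * c * dotp h g + c ^+ 2 * dotp g g.
Proof.
rewrite !dotpDl !dotpDr !dotpZl !dotpZr (dotpC g h). ring.
Qed.

Lemma dotp_sub_le k (a b : 'rV[R]_k) : dotp (a - b) (a - b) <= 2 * dotp a a + 2 * dotp b b.
Proof.
have := dotp_ge0 (a + b).
have e1 := dotp_expand a b (-1).
have e2 := dotp_expand a b 1.
rewrite scaleN1r in e1; rewrite scale1r in e2.
rewrite e2 e1 => H. lra.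
Qed.

Lemma separation k (w : 'rV[R]_k) (g : nat -> 'rV[R]_k) K (eps eta : R) :
  0 < eps -> 0 < eta ->
  (forall al : nat -> R, (forall j, 0 <= al j) ->
     eps ^+ 2 < dotp (w - \sum_(j < K) al j *: g j) (w - \sum_(j < K) al j *: g j)) ->
  exists h, eps ^+ 2 <= dotp h h /\ (forall j, (j < K)%N -> dotp h (g j) <= eta) /\
            dotp h h - eta <= dotp h w.
Proof.
move=> heps heta hyp.
pose f al := dotp (w - \sum_(j < K) al j *: g j) (w - \sum_(j < K) al j *: g j).
pose E := [set r | exists al : nat -> R, (forall j, 0 <= al j) /\ r = f al].
have E0 : E (dotp w w).
  by exists (fun=> 0); split=> //; rewrite /f big1 ?subr0 // => j _; rewrite scale0r.
have hlb : has_lbound E by exists 0 => r [al [_ ->]]; exact: dotp_ge0.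
have hinf : has_inf E by split; [exact: (ex_intro _ (dotp w w) E0) | exact: hlb].
set D := inf E.
have DlbE : forall r, E r -> D <= r by move=> r Er; exact: (ge_inf hlb Er).
have Deps : eps ^+ 2 <= D.
  apply: lb_le_inf; first exact: (ex_intro _ (dotp w w) E0).
  by move=> r [al [hal ->]]; apply: ltW; apply: hyp.
have Dw : D <= dotp w w by apply: DlbE.
pose G := \sum_(j < K) dotp (g j) (g j).
have G0 : 0 <= G by rewrite sumr_ge0 // => j _; exact: dotp_ge0.
pose Pw := 4 * dotp w w + 2.
have Pw0 : 0 < Pw by have := dotp_ge0 w; rewrite /Pw => ?; lra.
pose d := Num.min 1 (Num.min (eta ^+ 2 / (G + 1)) (eta ^+ 2 / (Pw + eta))).
have d0 : 0 < d.
  rewrite /d !lt_min ltr01 !divr_gt0 ?exprn_gt0 //; lra.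
have d1 : d <= 1 by rewrite /d ge_min lexx.
have d2 : d <= eta ^+ 2 / (G + 1) by rewrite /d !ge_min lexx orbT.
have d3 : d <= eta ^+ 2 / (Pw + eta) by rewrite /d !ge_min lexx !orbT.
have [r [al [hal ->]] hr] := inf_adherent d0 hinf.
pose p := \sum_(j < K) al j *: g j.
pose h := w - p.
have hH : dotp h h = f al by [].
exists h; split; first by rewrite hH; apply: le_trans Deps (DlbE _ _); exists al.
split.
  move=> j hj.
  pose t := eta / (G + 1).
  have t0 : 0 < t by rewrite divr_gt0 //; lra.
  pose al' := fun j' => al j' + (if j' == j then t else 0).
  have hal' : forall j', 0 <= al' j'.
    by move=> j'; rewrite /al'; case: (j' == j); rewrite ?addr0 ?addr_ge0 ?hal // ltW.
  have ep : \sum_(j' < K) al' j' *: g j' = p + t *: g j.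
    rewrite /al' /p; under eq_bigr do rewrite scalerDl.
    rewrite big_split /=; congr (_ + _).
    rewrite (bigD1 (Ordinal hj)) //= eqxx big1 ?addr0 // => j' hne.
    case: eqP => [hjj|]; last by rewrite scale0r.
    by move: hne; rewrite -(inj_eq val_inj) /= hjj eqxx.
  have hf := DlbE (f al') (ex_intro _ al' (conj hal' erefl)).
  have ef : f al' = dotp h h + 2 * (- t) * dotp h (g j) + (- t) ^+ 2 * dotp (g j) (g j).
    rewrite -dotp_expand /f ep /h; congr dotp; rewrite scaleNr opprD addrA //.
  have gG : dotp (g j) (g j) <= G.
    rewrite /G (bigD1 (Ordinal hj)) //= lerDl sumr_ge0 // => ? _; exact: dotp_ge0.
  have Hlt : dotp h h < D + d by rewrite hH.
  have tG : t * G <= eta.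
    rewrite /t mulrAC ler_pdivrMr; last lra.
    have := ltW heta => ?; nra.
  have td : d <= t * eta by rewrite /t mulrAC -expr2.
  have g0 := dotp_ge0 (g j).
  set X := dotp h (g j) in ef *.
  have H1 : t * (2 * X) <= t * (2 * eta).
    have : t * (t * dotp (g j) (g j)) <= t * eta.
      by rewrite ler_pM2l //; apply: le_trans tG; rewrite ler_pM2l.
    rewrite ef in hf; nra.
  by rewrite ler_pM2l // in H1; lra.
pose s := eta / (Pw + eta).
have s0 : 0 < s by rewrite divr_gt0 //; lra.
have s1 : s <= 1 by rewrite /s ler_pdivrMr; lra.
pose al'' := fun j => (1 - s) * al j.
have hal'' : forall j, 0 <= al'' j by move=> j; rewrite /al'' mulr_ge0 // subr_ge0.
have ep2 : \sum_(j < K) al'' j *: g j = (1 - s) *: p.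
  by rewrite /p scaler_sumr; apply: eq_bigr => j _; rewrite scalerA.
have hf := DlbE (f al'') (ex_intro _ al'' (conj hal'' erefl)).
have ef : f al'' = dotp h h + 2 * s * dotp h p + s ^+ 2 * dotp p p.
  rewrite -dotp_expand /f ep2 /h; congr dotp; rewrite scalerBl scale1r opprB addrA addrAC //.
have Hlt : dotp h h < D + d by rewrite hH.
have hpp : dotp p p <= Pw.
  have -> : p = w - h by rewrite /h opprB addrC subrK.
  have := dotp_sub_le w h; rewrite /Pw; lra.
have sP : s * Pw <= eta.
  rewrite /s mulrAC ler_pdivrMr; last lra.
  have := ltW heta => ?; nra.
have sd : d <= s * eta by rewrite /s mulrAC -expr2.
have p0 := dotp_ge0 p.
have ew : dotp h w = dotp h h + dotp h p by rewrite -dotpDr /h subrK.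
rewrite ew.
set Y := dotp h p in ef *.
have H1 : s * (- 2 * Y) <= s * (2 * eta).
  have : s * (s * dotp p p) <= s * eta.
    by rewrite ler_pM2l //; apply: le_trans sP; rewrite ler_pM2l.
  rewrite ef in hf; nra.
by rewrite ler_pM2l // in H1; lra.
Qed.
End Sep.


Lemma fact_le n : (n`! <= n ^ n)%N.
Proof.
elim: n => // n IH; rewrite factS expnS leq_mul //; apply: leq_trans IH _.
by case: n => // n; rewrite leq_exp2r.
Qed.

Section Arith.
Variable R : realType.

Lemma ln2_ge : 1 / 2 <= ln (2 : R).
Proof.
have h := @le_ln1Dx R (- (1 / 2)) ltac:(lra).
have e : 1 + - (1 / 2) = (2 : R)^-1 by field.
rewrite e lnV ?posrE // in h; lra.
Qed.

Lemma arith (n m : nat) (eps : R) : (2 <= n)%N -> 0 < eps -> eps < 1 ->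
  2 ^+ m * (eps / 2) ^+ (2 * n) <= (n`!)%:R * ((eps / 2) ^+ 2 + 4 * m%:R) ^+ n ->
  m.+1%:R <= 64 * n%:R * ln (n%:R / eps).
Proof.
move=> n2 e0 e1 H.
set e := eps / 2.
have e0' : 0 < e by rewrite /e; lra.
set nr := n%:R : R.
have nr2 : 2 <= nr by rewrite /nr (ler_nat R 2 n).
have nr0 : 0 < nr by lra.
set L := ln (nr / eps).
set Y := 1 + 16 * m%:R / nr.
have m0 : 0 <= m%:R :> R by [].
have Y1 : 1 <= Y by rewrite /Y lerDl divr_ge0 //; lra.
set X := (nr / eps) ^+ 2 * Y.
have ne1 : 1 <= nr / eps by rewrite ler_pdivlMr //; lra.
have X0 : 0 < X by rewrite /X mulr_gt0 ?exprn_gt0 //; lra.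
have hX : nr * (e ^+ 2 + 4 * m%:R) <= X * e ^+ 2.
  rewrite /X /Y /e.
  have -> : (nr / eps) ^+ 2 * (1 + 16 * m%:R / nr) * (eps / 2) ^+ 2 = (nr * nr + 16 * m%:R * nr) / 4.
    by field; apply/andP; split; apply/eqP; lra.
  have -> : nr * ((eps / 2) ^+ 2 + 4 * m%:R) = (nr * eps ^+ 2 + 16 * m%:R * nr) / 4 by field.
  rewrite ler_pM2r; last lra.
  rewrite lerD2r ler_pM2l // expr2; nra.
have H2 : 2 ^+ m <= X ^+ n.
  have : 2 ^+ m * e ^+ (2 * n) <= X ^+ n * e ^+ (2 * n).
    apply: le_trans H _.
    have hf : (n`!)%:R <= nr ^+ n by rewrite /nr -natrX ler_nat fact_le.
    apply: le_trans (_ : nr ^+ n * (e ^+ 2 + 4 * m%:R) ^+ n <= _).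
      have hp : 0 < e ^+ 2 + 4 * m%:R by have := exprn_gt0 2 e0'; lra.
      by rewrite ler_pM2r // exprn_gt0.
    rewrite -exprMn exprM -exprMn.
    have he2 : 0 < e ^+ 2 by apply: exprn_gt0.
    apply: lerXn2r; last exact: hX; rewrite nnegrE; apply: mulr_ge0; lra.
  by rewrite ler_pM2r // exprn_gt0.
have H3 : m%:R * ln 2 <= nr * ln X.
  have h : ln (2 ^+ m) <= ln (X ^+ n) by rewrite ler_ln // posrE exprn_gt0.
  by rewrite !lnXn // -[ln 2 *+ m]mulr_natl -[ln X *+ n]mulr_natl in h.
have H4 : ln X = 2 * L + ln Y.
  have ne0 : 0 < nr / eps by rewrite divr_gt0.
  have sq0 : 0 < (nr / eps) ^+ 2 by rewrite exprn_gt0.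
  have Y0 : 0 < Y by lra.
  rewrite /X lnM ?posrE // lnXn //.
  by rewrite [in RHS]mulr_natl.
have l64 : ln (64:R) = 6 * ln 2.
  have -> : (64:R) = 2 ^+ 6 by rewrite -natrX.
  by rewrite lnXn // mulr_natl.
have H5 : ln Y <= Y / 64 - 1 + 6 * ln 2.
  have Y64 : 0 < Y / 64 by rewrite divr_gt0 //; lra.
  have hm1 : -1 < Y / 64 - 1 by lra.
  have h := le_ln1Dx hm1.
  have e64 : 1 + (Y / 64 - 1) = Y / 64 by rewrite addrC subrK.
  rewrite e64 ln_div ?posrE ?l64 in h; lra.
have hY : nr * Y = nr + 16 * m%:R.
  by rewrite /Y mulrDr mulr1 [nr * (_ / _)]mulrC divfK // lt0r_neq0.
have l2 := ln2_ge.
have ne2 : 2 <= nr / eps by rewrite ler_pdivlMr //; lra.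
have hLn : ln 2 <= L by rewrite /L ler_ln ?posrE //; lra.
have hA : 1 <= nr * L.
  have hL0 : 0 <= L by lra.
  have : 2 * L <= nr * L by exact: (ler_wpM2r hL0 nr2).
  lra.
have hB : nr * ln 2 <= nr * L by rewrite ler_pM2l.
have hC : (m%:R : R) * (1/2) <= m%:R * ln 2 by nra.
have hD : nr * ln Y <= nr * (Y / 64 - 1 + 6 * ln 2) by rewrite ler_pM2l.
have hE : nr * (Y / 64 - 1 + 6 * ln 2) = (nr * Y) / 64 - nr + 6 * (nr * ln 2) by ring.
rewrite hE hY in hD.
rewrite H4 mulrDr mulrCA in H3.
rewrite -mulrA -addn1 natrD.
lra.
Qed.

End Arith.


Section Glue.
Variable R : realType.

Lemma dotvE d (u x : 'rV[R]_d) : dotv u x = dotp u x.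
Proof. by rewrite /dotv dotpE. Qed.

Lemma norm2E d (x : 'rV[R]_d) : norm2 x = Num.sqrt (dotp x x).
Proof. by rewrite /norm2 dotpE; congr Num.sqrt; apply: eq_bigr => i _; rewrite expr2. Qed.

Lemma dotp_V d k (V : 'M[R]_(k, d)) (x : 'rV[R]_d) (y : 'rV[R]_k) :
  dotp x (y *m V) = dotp (x *m V^T) y.
Proof. by rewrite /dotp trmx_mul mulmxA. Qed.

Lemma dotp_VV d k (V : 'M[R]_(k, d)) (y1 y2 : 'rV[R]_k) : V *m V^T = 1%:M ->
  dotp (y1 *m V) (y2 *m V) = dotp y1 y2.
Proof. by move=> hV; rewrite dotp_V -mulmxA hV mulmx1. Qed.

Lemma span_repr d k (V : 'M[R]_(k, d)) (x : 'rV[R]_d) : V *m V^T = 1%:M ->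
  (x <= V)%MS -> x = (x *m V^T) *m V.
Proof. by move=> hV /submxP [D ->]; rewrite -[D *m V *m V^T]mulmxA hV mulmx1. Qed.

Lemma bessel d k (V : 'M[R]_(k, d)) (h : 'rV[R]_d) : V *m V^T = 1%:M ->
  dotp (h *m V^T) (h *m V^T) <= dotp h h.
Proof.
move=> hV.
set c := h *m V^T.
have e1 : dotp h (c *m V) = dotp c c by rewrite dotp_V.
have e2 : dotp (c *m V) h = dotp c c by rewrite dotpC dotp_V.
have e3 : dotp (c *m V) (c *m V) = dotp c c by rewrite dotp_VV.
have := dotp_ge0 (h - c *m V).
rewrite dotpBl !dotpBr e1 e2 e3.
lra.
Qed.

Lemma sq_lt_of_lt (a b : R) : 0 < a -> a < Num.sqrt b -> a ^+ 2 < b.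
Proof.
move=> a0 hab.
have b0 : 0 < b.
  by have [hb|//] := lerP b 0; rewrite ler0_sqrtr // in hab; lra.
have := sqr_sqrtr (ltW b0) => e.
have s0 := sqrtr_ge0 b.
rewrite -e; nra.
Qed.

Lemma sum_sq_le (b : nat) (P : pred nat) (q : nat -> R) :
  (forall a, (a < b)%N -> P a -> 0 <= q a) ->
  \sum_(a < b | P a) q a ^+ 2 <= (\sum_(a < b | P a) q a) ^+ 2.
Proof.
move=> hq; rewrite expr2 mulr_suml; apply: ler_sum => a Pa.
rewrite expr2 ler_wpM2l ?hq //.
rewrite (bigD1 a) //= lerDl sumr_ge0 // => i /andP[Pi _]; exact: hq.
Qed.


Lemma filter_decomp (T : eqType) (x0 : T) (ys : seq T) k : uniq ys -> (k < size ys)%N ->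
  [seq y <- ys | y != nth x0 ys k] = take k ys ++ drop k.+1 ys.
Proof.
move=> u hk.
set x := nth x0 ys k.
have e : ys = take k ys ++ x :: drop k.+1 ys by rewrite /x -drop_nth // cat_take_drop.
have u' := u; rewrite e cat_uniq /= negb_or in u'.
case/and3P: u' => _ /andP[xt _] /andP[xd _].
rewrite {1}e filter_cat /= eqxx /=.
congr (_ ++ _); apply/all_filterP/allP => y hy; apply/eqP => yx.
  by rewrite -yx hy in xt.
by rewrite -yx hy in xd.
Qed.

Lemma nth_filter_decomp (T : eqType) (x0 : T) (ys : seq T) k j : uniq ys -> (k < size ys)%N ->
  (j < k)%N -> nth x0 [seq y <- ys | y != nth x0 ys k] j = nth x0 ys j.
Proof.
move=> u hk hj; rewrite filter_decomp // nth_cat size_take hk hj nth_take //.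
Qed.

Lemma size_filter_decomp (T : eqType) (x0 : T) (ys : seq T) k : uniq ys -> (k < size ys)%N ->
  size [seq y <- ys | y != nth x0 ys k] = (size ys).-1.
Proof.
move=> u hk; rewrite filter_decomp // size_cat size_take hk size_drop.
by case: (size ys) hk => // n hn; rewrite subSS; lia.
Qed.

End Glue.


Section Step.
Variable R : realType.

Definition zvec d n (V : 'M[R]_(n, d)) (ys : seq 'rV[R]_d) a :=
  nth 0 ys a.+1 *m V^T - nth 0 ys a *m V^T.

Lemma leT_total d (u : 'rV[R]_d) : total (fun x y : 'rV[R]_d => dotv u y <= dotv u x).
Proof. by move=> x y; exact: le_total. Qed.

Lemma leT_trans d (u : 'rV[R]_d) : transitive (fun x y : 'rV[R]_d => dotv u y <= dotv u x).
Proof. by move=> y x z /= h1 h2; apply: le_trans h2 h1. Qed.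

Lemma step_general d n (eps : R) (u : 'rV[R]_d) (S : seq 'rV[R]_d) (V : 'M[R]_(n, d))
    (P : pred nat) b :
  0 < eps -> V *m V^T = 1%:M -> (forall x, x \in S -> (x <= V)%MS) ->
  uniq (sort_by_u u S) -> (b.+1 < size S)%N ->
  ~ derives eps u [seq y <- S | y != nth 0 (sort_by_u u S) b.+1] (nth 0 (sort_by_u u S) b.+1) ->
  exists h : 'rV[R]_n, 0 < dotp h h /\
    (eps / 2) ^+ 2 * dotp h h + \sum_(a < b | P a) dotp h (zvec V (sort_by_u u S) a) ^+ 2
      <= dotp h (zvec V (sort_by_u u S) b) ^+ 2.
Proof.
move=> heps hV hspan huniq hbS hfail.
set ys := sort_by_u u S in huniq hfail *.
have pys : perm_eq ys S by rewrite /ys /sort_by_u perm_sort perm_refl.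
have sz : size ys = size S := perm_size pys.
have memys : forall y, y \in ys -> y \in S by move=> y; rewrite (perm_mem pys).
have hb : (b.+1 < size ys)%N by rewrite sz.
set x := nth 0 ys b.+1 in hfail.
have hT : sort_by_u u [seq y <- S | y != x] = [seq y <- ys | y != x].
  by rewrite /ys /sort_by_u filter_sort //; [exact: leT_total | exact: leT_trans].
have szT : size [seq y <- ys | y != x] = (size ys).-1 by exact: size_filter_decomp.
have hTj : forall j, (j < b.+1)%N -> nth 0 [seq y <- ys | y != x] j = nth 0 ys j.
  by move=> j hj; exact: nth_filter_decomp.
rewrite /derives hT in hfail.
move: szT hTj hfail; case: [seq y <- ys | y != x] => [|x1 r] szT hTj hfail.
  by move: szT hb => /=; lia.
have x1e : x1 = nth 0 ys 0 by have := hTj 0%N erefl.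
set K := (size (x1 :: r)).-1 in hfail.
pose g := fun j => (x1 :: r)`_j.+1 - (x1 :: r)`_j.
have hsep : forall al : nat -> R, (forall j, 0 <= al j) ->
    eps ^+ 2 < dotp (x - x1 - \sum_(j < K) al j *: g j) (x - x1 - \sum_(j < K) al j *: g j).
  move=> al hal; apply: sq_lt_of_lt => //; rewrite -norm2E ltNge; apply/negP => hle.
  by apply: hfail; exists al; split.
set s := size ys.
have s0 : 0 < s%:R :> R by rewrite ltr0n; lia.
pose eta := eps ^+ 2 / (4 * s%:R).
have eta0 : 0 < eta by rewrite divr_gt0 ?exprn_gt0 //; lra.
have [h [hH [hg hw]]] := separation (w := x - x1) (g := g) (K := K) heps eta0 hsep.
pose q a := dotp h (nth 0 ys a.+1 - nth 0 ys a).
pose h' := h *m V^T.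
have hspanys : forall a, (a < s)%N -> dotp h (nth 0 ys a) = dotp h' (nth 0 ys a *m V^T).
  move=> a ha; rewrite {1}(span_repr hV (hspan _ (memys _ (mem_nth 0 ha)))).
  by rewrite dotp_V.
have hq : forall a, (a < b.+1)%N -> dotp h' (zvec V ys a) = q a.
  move=> a ha; rewrite /zvec /q dotpBr dotpBr -!hspanys //; lia.
have hqle : forall a, (a < b)%N -> q a <= eta.
  move=> a ha.
  have hK : (a < K)%N by rewrite /K szT -/s; lia.
  have := hg a hK; rewrite /g.
  have e1 : (x1 :: r)`_a.+1 = nth 0 ys a.+1 by apply: hTj; lia.
  have e2 : (x1 :: r)`_a = nth 0 ys a by apply: hTj; lia.
  by rewrite e1 e2.
have htel : \sum_(a < b.+1) q a = dotp h (x - x1).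
  rewrite x1e /x dotpBr -(big_mkord xpredT q).
  apply: (@telescope_sumr_eq _ 0 b.+1 (fun k => dotp h (nth 0 ys k)) q) => // k _.
  by rewrite /q dotpBr.
have hsplit : \sum_(a < b) q a = dotp h (x - x1) - q b.
  by rewrite -htel big_ord_recr /= addrK.
exists h'.
have hqb : dotp h' (zvec V ys b) = q b by apply: hq.
have hsum : \sum_(a < b | P a) dotp h' (zvec V ys a) ^+ 2 = \sum_(a < b | P a) `|q a| ^+ 2.
  apply: eq_bigr => a _; rewrite hq; last by apply: leqW.
  by rewrite real_normK // num_real.
rewrite hqb hsum.
set A := \sum_(a < b | P a) `|q a|.
have hA1 : \sum_(a < b | P a) `|q a| ^+ 2 <= A ^+ 2 by apply: (@sum_sq_le R b P (fun a => `|q a|)) => a _ _.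
have hA0 : 0 <= A by rewrite sumr_ge0.
have hA2 : A <= \sum_(a < b) (2 * eta - q a).
  rewrite /A big_mkcond /=; apply: ler_sum => a _.
  have := hqle a (ltn_ord a) => hqa.
  case: (P a) => /=; last lra.
  rewrite ler_norml; apply/andP; split; lra.
have hA3 : \sum_(a < b) (2 * eta - q a) = b%:R * (2 * eta) - \sum_(a < b) q a.
  by rewrite sumrB sumr_const card_ord [b%:R * _]mulr_natl.
rewrite hA3 hsplit in hA2.
set H := dotp h h in hH hw hA2 *.
set Q := q b in hA2 *.
have hbs : b%:R + 1 <= s%:R :> R.
  have : (b.+1 <= s)%N by apply: ltnW.
  by rewrite -(ler_nat R) -addn1 natrD.
have etas : eta * s%:R = eps ^+ 2 / 4.
  rewrite /eta invfM mulrA -mulrA mulVf ?mulr1 //; exact: lt0r_neq0.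
have hetab : eta * (2 * b%:R + 1) <= eps ^+ 2 / 2.
  have : eta * (2 * b%:R + 1) <= eta * (2 * s%:R) by rewrite ler_pM2l //; lra.
  lra.
set D := H - eta * (2 * b%:R + 1).
have hD : H / 2 <= D by rewrite /D; lra.
have hQ : A + D <= Q by rewrite /D; lra.
have H0 : 0 <= H by apply: dotp_ge0.
have hB : dotp h' h' <= H by apply: bessel.
have hB0 : 0 <= dotp h' h' by apply: dotp_ge0.
have eps2 : 0 < eps ^+ 2 by apply: exprn_gt0.
split.
  rewrite lt_neqAle hB0 andbT eq_sym; apply/negP => /eqP h0.
  have := dotp_eq0 h0 => h'0.
  have : Q = 0 by rewrite /Q -hqb h'0 dotpC dotp0r.
  lra.
have f1 : (eps / 2) ^+ 2 * dotp h' h' <= H * H / 4.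
  have -> : (eps / 2) ^+ 2 = eps ^+ 2 / 4 by field.
  nra.
have f2 : A ^+ 2 + H * H / 4 <= Q ^+ 2.
  have D0 : 0 <= D by lra.
  nra.
lra.
Qed.

End Step.


Section One.
Variable R : realType.

Lemma head_strict d (u : 'rV[R]_d) (S : seq 'rV[R]_d) y :
  uniq [seq dotv u x | x <- S] -> y \in sort_by_u u S -> y != nth 0 (sort_by_u u S) 0 ->
  dotv u y < dotv u (nth 0 (sort_by_u u S) 0).
Proof.
move=> hu hy hne.
set ys := sort_by_u u S in hy hne *.
have pys : perm_eq ys S by rewrite /ys /sort_by_u perm_sort perm_refl.
have hs : sorted (fun x y : 'rV[R]_d => dotv u y <= dotv u x) ys by apply: sort_sorted; exact: leT_total.
have um : uniq [seq dotv u x | x <- ys] by rewrite (perm_uniq (perm_map _ pys)).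
set i := index y ys.
have hi : (i < size ys)%N by rewrite index_mem.
have ey : nth 0 ys i = y by apply: nth_index.
have i0 : i != 0%N by apply/eqP => h0; move: hne; rewrite -ey h0 eqxx.
have hle := sorted_ltn_nth (@leT_trans R d u) 0 hs.
have h1 : dotv u (nth 0 ys i) <= dotv u (nth 0 ys 0).
  by apply: (hle 0%N i) => //=; [rewrite inE; case: (size ys) hi | lia].
rewrite -ey lt_neqAle h1 andbT.
have h0 : (0 < size ys)%N by lia.
rewrite -(nth_map 0 0 (dotv u) hi) -(nth_map 0 0 (dotv u) h0).
by rewrite nth_uniq ?size_map.
Qed.


Lemma step_one d (eps : R) (u : 'rV[R]_d) (S : seq 'rV[R]_d) (V : 'M[R]_(1, d)) b :
  0 < eps -> V *m V^T = 1%:M -> (forall x, x \in S -> (x <= V)%MS) ->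
  uniq [seq dotv u x | x <- S] -> (b.+1 < size S)%N -> (2 < size S)%N ->
  derives eps u [seq y <- S | y != nth 0 (sort_by_u u S) b.+1] (nth 0 (sort_by_u u S) b.+1).
Proof.
move=> heps hV hspan hu hbS hS2.
set ys := sort_by_u u S.
have pys : perm_eq ys S by rewrite /ys /sort_by_u perm_sort perm_refl.
have sz : size ys = size S := perm_size pys.
have memys : forall y, y \in ys -> y \in S by move=> y; rewrite (perm_mem pys).
have uS : uniq S by apply: map_uniq hu.
have huniq : uniq ys by rewrite (perm_uniq pys).
have hb : (b.+1 < size ys)%N by rewrite sz.
set x := nth 0 ys b.+1.
have xin : x \in ys by apply: mem_nth.
have hT : sort_by_u u [seq y <- S | y != x] = [seq y <- ys | y != x].
  by rewrite /ys /sort_by_u filter_sort //; [exact: leT_total | exact: leT_trans].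
have szT : size [seq y <- ys | y != x] = (size ys).-1 by exact: size_filter_decomp.
have uT : uniq [seq y <- ys | y != x] by apply: filter_uniq.
have memT : forall y, y \in [seq y <- ys | y != x] -> (y \in ys) && (y != x).
  by move=> y; rewrite mem_filter andbC.
have hT0 : nth 0 [seq y <- ys | y != x] 0 = nth 0 ys 0 by apply: nth_filter_decomp.
rewrite /derives hT.
move: szT uT memT hT0; case: [seq y <- ys | y != x] => [|x1 [|x2 r]] szT uT memT hT0.
- by move: szT hS2; rewrite -sz /=; lia.
- by move: szT hS2; rewrite -sz /=; lia.
rewrite /= in hT0.
have x1ys : x1 \in ys by case/andP: (memT x1 (mem_head _ _)).
have x2in : x2 \in [:: x1, x2 & r] by rewrite !inE eqxx orbT.
have x2ys : x2 \in ys by case/andP: (memT x2 x2in).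
have x2x1 : x2 != x1.
  by move: uT => /= /andP[h _]; apply/eqP => e; move: h; rewrite e mem_head.
have xx1 : x != x1.
  by case/andP: (memT x1 (mem_head _ _)) => _; rewrite eq_sym.
have lt1 : dotv u x < dotv u x1.
  by rewrite hT0; apply: head_strict => //; rewrite -hT0.
have lt2 : dotv u x2 < dotv u x1.
  by rewrite hT0; apply: head_strict => //; rewrite -hT0.
pose c (y : 'rV[R]_d) : R := (y *m V^T) 0 0.
pose uc : R := (u *m V^T) 0 0.
have hcv : forall y, y \in S -> dotv u y = uc * c y.
  move=> y hy; rewrite dotvE {1}(span_repr hV (hspan y hy)) dotp_V dotpE big_ord1.
  by rewrite /uc /c; congr (_ * _); rewrite ord1.
rewrite !hcv ?memys // in lt1 lt2.
set A := c x1 - c x.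
set B := c x1 - c x2.
have hA : 0 < uc * A by rewrite /A; lra.
have hB : 0 < uc * B by rewrite /B; lra.
have AB : 0 < A * B by nra.
have B0 : B != 0 by apply/eqP => e; move: AB; rewrite e mulr0 ltxx.
pose mu := A / B.
have mu0 : 0 <= mu.
  have -> : mu = (A * B) / (B ^+ 2) by rewrite /mu; field.
  by rewrite divr_ge0 // ?sqr_ge0 // ltW.
exists (fun j => if j == 0%N then mu else 0); split.
  by move=> j; case: (j == 0%N).
have hsum : \sum_(j < (size [:: x1, x2 & r]).-1)
    (if (j : nat) == 0%N then mu else 0) *: ([:: x1, x2 & r]`_j.+1 - [:: x1, x2 & r]`_j)
    = mu *: (x2 - x1).
  by rewrite /= big_ord_recl /= big1 ?addr0 // => j _; rewrite /= scale0r.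
rewrite hsum.
pose cv (y : 'rV[R]_d) := y *m V^T.
pose w := cv x - cv x1 - mu *: (cv x2 - cv x1).
have xS : x \in S by apply: memys.
have x1S : x1 \in S by apply: memys.
have x2S : x2 \in S by apply: memys.
have ev : forall y : 'rV[R]_1, dotp y (const_mx 1) = y 0 0.
  by move=> y; rewrite dotpE big_ord1 mxE mulr1.
have hw00 : w 0 0 = 0.
  rewrite -ev /w !dotpBl dotpZl dotpBl !ev.
  have -> : mu = A / B by [].
  rewrite /A /B -/(c x) -/(c x1) -/(c x2).
  by field.
have hv : x - x1 - mu *: (x2 - x1) = w *m V.
  rewrite /w !mulmxBl -scalemxAl mulmxBl /cv.
  by rewrite -(span_repr hV (hspan _ xS)) -(span_repr hV (hspan _ x1S)) -(span_repr hV (hspan _ x2S)).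
rewrite hv norm2E dotp_VV // dotpE big_ord1 hw00 mulr0 sqrtr0.
by apply: ltW.
Qed.

End One.


Unset Implicit Arguments.

Lemma count_shift (T : Type) (x0 y0 : T) (ys' : seq T) (p : pred T) :
  count p ys' = (\sum_(a < size ys' | p (nth x0 (y0 :: ys') a.+1)) 1)%N.
Proof.
rewrite -sum1_count (big_nth x0) big_mkord.
by apply: eq_bigl => a.
Qed.

Lemma dot_le1 (R : realType) d k (V : 'M[R]_(k, d)) (y : 'rV[R]_d) :
  V *m V^T = 1%:M -> (y <= V)%MS -> norm2 y <= 1 ->
  dotp (y *m V^T) (y *m V^T) <= 1.
Proof.
move=> hV hy hn.
have e : dotp (y *m V^T) (y *m V^T) = dotp y y.
  have := dotp_VV (y *m V^T) (y *m V^T) hV.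
  by rewrite -(span_repr hV hy) => ->.
rewrite e; rewrite norm2E in hn.
have h0 := dotp_ge0 y.
rewrite -(sqr_sqrtr h0).
have := sqrtr_ge0 (dotp y y) => ?.
nra.
Qed.

Lemma bound_main (R : realType) d (eps : R) (u : 'rV[R]_d) (S : seq 'rV[R]_d) d'
    (V : 'M[R]_(d', d)) (y0 : 'rV[R]_d) ys' :
  0 < eps -> eps < 1 -> V *m V^T = 1%:M -> (forall x, x \in S -> (x <= V)%MS) ->
  (forall x, x \in S -> norm2 x <= 1) -> uniq [seq dotv u x | x <- S] -> (0 < d')%N ->
  (3 < size S)%N -> sort_by_u u S = y0 :: ys' ->
  let c := (\sum_(a < size ys' | ~~ `[< derives eps u [seq y <- S | y != nth 0%R (y0 :: ys') a.+1]
                                        (nth 0%R (y0 :: ys') a.+1) >]) 1)%N in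
  c = 0%N \/ c.+1%:R <= 64 * d'%:R * ln (d'%:R / eps).
Proof.
move=> e0 e1 hV hspan hnorm hu hd' hs4 hys c.
have sz : size (sort_by_u u S) = size S by apply: perm_size; rewrite /sort_by_u perm_sort perm_refl.
have szs : (size ys').+1 = size S by rewrite -sz hys.
case: d' V hV hspan hd' => [//|[|n']] V hV hspan hd'.
- left; rewrite /c big1 // => a /negP []; apply/asboolP; rewrite -hys.
  move: (ltn_ord a) => ha; apply: (@step_one R d eps u S V a) => //; lia.
- right.
  set P := fun a : nat => ~~ `[< derives eps u [seq y <- S | y != nth 0%R (y0 :: ys') a.+1]
                                        (nth 0%R (y0 :: ys') a.+1) >].
  have uS : uniq S by apply: map_uniq hu.
  have huniq : uniq (sort_by_u u S) by rewrite /sort_by_u sort_uniq.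
  have he : 0 < eps / 2 by lra.
  have memS : forall a, (a <= size ys')%N -> nth 0%R (y0 :: ys') a \in S.
    move=> a ha.
    have : nth 0%R (y0 :: ys') a \in sort_by_u u S by rewrite hys mem_nth.
    have pys : perm_eq (sort_by_u u S) S by rewrite /sort_by_u perm_sort perm_refl.
    by rewrite (perm_mem pys).
  have hz : forall a, (a < size ys')%N -> P a ->
      dotp (zvec V (y0 :: ys') a) (zvec V (y0 :: ys') a) <= 4.
    move=> a ha _; rewrite /zvec.
    apply: le_trans (dotp_sub_le _ _) _.
    have h1 := @dot_le1 R d n'.+2 V _ hV (hspan _ (memS a.+1 ha)) (hnorm _ (memS a.+1 ha)).
    have h2 := @dot_le1 R d n'.+2 V _ hV (hspan _ (memS a (ltnW ha))) (hnorm _ (memS a (ltnW ha))).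
    lra.
  have hyp : forall b, (b < size ys')%N -> P b -> exists h, 0 < dotp h h /\
      (eps / 2) ^+ 2 * dotp h h + \sum_(a < b | P a) dotp h (zvec V (y0 :: ys') a) ^+ 2
        <= dotp h (zvec V (y0 :: ys') b) ^+ 2.
    move=> b hb hPb.
    have hnd : ~ derives eps u [seq y <- S | y != nth 0 (sort_by_u u S) b.+1]
                   (nth 0 (sort_by_u u S) b.+1) by rewrite hys; apply/asboolPn.
    have hbS : (b.+1 < size S)%N by lia.
    have := @step_general R d n'.+2 eps u S V P b e0 hV hspan huniq hbS hnd.
    by rewrite hys.
  have hpot := @potential R n'.+1 (eps / 2) P (zvec V (y0 :: ys')) (size ys') he hz hyp.
  exact: (@arith R n'.+2 (cnt P (size ys')) eps isT e0 e1 hpot).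
Qed.

Theorem lemmaA2 (R : realType) :
  exists C : R, 0 < C /\
  forall (d : nat) (eps : R) (u : 'rV[R]_d) (S : seq 'rV[R]_d) (d' : nat),
    0 < eps < 1 ->
    (forall x, x \in S -> norm2 x <= 1) ->
    uniq [seq dotv u x | x <- S] ->
    intrinsic_dim S d' ->
    (0 < d')%N ->
    let t : int := Num.ceil (C * d'%:R * ln (d'%:R / eps)) in
    (4%:Z * t <= (size S)%:Z)%R ->
    (3 / 4 : R) * (size S)%:R <=
      ((count (fun x => `[< derives eps u [seq y <- S | y != x] x >]) S)%:R : R).
Proof.
exists 64; split; first lra.
move=> d eps u S d' /andP[e0 e1] hnorm hu [[V [hV hspan]] _] hd' t ht.
set Q := fun x => `[< derives eps u [seq y <- S | y != x] x >].
set s := size S.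
set ys := sort_by_u u S.
have pys : perm_eq ys S by rewrite /ys /sort_by_u perm_sort perm_refl.
have sz : size ys = s := perm_size pys.
have uS : uniq S by apply: map_uniq hu.
have huniq : uniq ys by rewrite (perm_uniq pys).
have hcQ : count Q S = count Q ys by apply/esym/(seq.permP pys).
set T := (t%:~R : R).
have hT4 : 4 * T <= s%:R.
  by move: ht; rewrite -(ler_int R) intrM -!pmulrn.
have hTge : 64 * d'%:R * ln (d'%:R / eps) <= T by apply: ceil_ge.
have hTpos : 0 < 64 * d'%:R * ln (d'%:R / eps).
  rewrite mulr_gt0 // ?mulr_gt0 ?ltr0n // ln_gt0 // ltr_pdivlMr // mul1r.
  by apply: lt_le_trans e1 _; rewrite ler1n.
have T1 : 1 <= T.
  have : (0 < t)%R by rewrite /t ceil_gt0.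
  by rewrite -(ltr_int R) => h; rewrite /T; move: h; rewrite -[1]/(1%:~R) ler_int ltr_int.
have hs4 : (4 <= s)%N.
  by rewrite -(ler_nat R); apply: le_trans hT4; lra.
have [y0 [ys' hys]] : exists y0 ys', sort_by_u u S = y0 :: ys'.
  move: sz hs4; rewrite /ys; case: (sort_by_u u S) => [|y0 ys'] /=; first lia.
  by move=> _ _; exists y0, ys'.
have szs : size ys' = s.-1 by rewrite -sz /ys hys.
have hcnt : count (predC Q) ys' =
    (\sum_(a < size ys' | ~~ Q (nth (0%R : 'rV[R]_d) (y0 :: ys') a.+1)) 1)%N by apply: count_shift.
have hmain : (count (predC Q) ys').+1%:R <= T.
  rewrite hcnt.
  have hs4' : (3 < size S)%N by [].
  case: (@bound_main R d eps u S d' V y0 ys' e0 e1 hV hspan hnorm hu hd' hs4' hys) => [-> //|h].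
  by apply: le_trans hTge.
have hc : (count (predC Q) ys)%:R <= T.
  rewrite /ys hys /=.
  apply: le_trans hmain; rewrite ler_nat /=.
  by case: (~~ Q y0); rewrite ?add1n ?add0n // leqnSn.
have := count_predC Q ys; rewrite sz => /(congr1 (fun n => n%:R : R)); rewrite natrD => hsum.
change (3 / 4 * (s%:R) <= ((count Q S)%:R : R)).
rewrite hcQ; lra.
Qed.
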